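(* Let $\mathcal{T}\in\mathbb{K}^{R\times R\times K}$ be slice mix invertible, let $\mathbf{U}\in\mathbb{K}^{K\times K}$ be invertible, and set $\mathcal{S}=\mathcal{T}\cdot_3\mathbf{U}$ with frontal slices $\mathbf{S}_k=\mathcal{S}(:,:,k)$. If $\mathcal{T}$ has a JGE value of algebraic multiplicity $m$, then for any $i\neq j$ the subpencil $(\mathbf{S}_i,\mathbf{S}_j)$ (viewed as a tensor in $\mathbb{K}^{R\times R\times 2}$) has a JGE value of algebraic multiplicity at least $m$.
   Context: $\mathbb{K}$ denotes $\mathbb{R}$ or $\mathbb{C}$. $\mathcal{T}\cdot_3\mathbf{U}$ is defined by $(\mathcal{T}\cdot_3\mathbf{U})(a,b,:)=\mathbf{U}\,\mathcal{T}(a,b,:)$, i.e. $\mathbf{S}_k=\sum_l U_{kl}\mathbf{T}_l$. For $\mathcal{X}\in\mathbb{K}^{R\times R\times L}$ with slices $\mathbf{X}_k$: slice mix invertible means some linear combination of slices is invertible; $p_{\mathcal{X}}(\boldsymbol{\gamma})=\det(\sum_k\gamma_k\mathbf{X}_k)$; for nonzero $\boldsymbol{\lambda}\in\mathbb{K}^L$ the algebraic multiplicity of $\mathrm{span}(\boldsymbol{\lambda})$ is the largest $m$ with $(\sum_k\lambda_k\gamma_k)^m\mid p_{\mathcal{X}}$, and $\mathrm{span}(\boldsymbol{\lambda})$ is a JGE value (of that algebraic multiplicity) when this is positive. *)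

(* Defs.v *)
From HB Require Import structures.
From mathcomp Require Import all_boot all_order all_algebra.
From mathcomp Require Import mpoly.
Set Implicit Arguments. Unset Strict Implicit. Unset Printing Implicit Defensive.
Import Order.TTheory GRing.Theory Num.Theory.
Local Open Scope ring_scope.

(* A third-order tensor X in K^{R x R x L} is given by its frontal slices
   X k = X(:,:,k), k : 'I_L. *)

Definition mdvd (F : fieldType) (L : nat) (f p : {mpoly F[L]}) : Prop :=
  exists q : {mpoly F[L]}, p = q * f.

Definition slice_mix_invertible (F : fieldType) (R L : nat)
  (X : 'I_L -> 'M[F]_R) : Prop :=
  exists g : 'I_L -> F, (\sum_(k < L) g k *: X k) \in unitmx.

Definition pX (F : fieldType) (R L : nat) (X : 'I_L -> 'M[F]_R) : {mpoly F[L]} :=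
  \det (\matrix_(a < R, b < R) \sum_(k < L) 'X_k * (X k a b)%:MP).

Definition linform (F : fieldType) (L : nat) (lam : 'I_L -> F) : {mpoly F[L]} :=
  \sum_(k < L) (lam k)%:MP * 'X_k.

Definition pow_divides (F : fieldType) (R L : nat) (X : 'I_L -> 'M[F]_R)
  (lam : 'I_L -> F) (m : nat) : Prop :=
  mdvd (linform lam ^+ m) (pX X).

Definition alg_mult_eq (F : fieldType) (R L : nat) (X : 'I_L -> 'M[F]_R)
  (lam : 'I_L -> F) (m : nat) : Prop :=
  pow_divides X lam m /\ ~ pow_divides X lam m.+1.

Definition has_JGE_value_mult (F : fieldType) (R L : nat) (X : 'I_L -> 'M[F]_R)
  (m : nat) : Prop :=
  exists lam : 'I_L -> F, (exists k, lam k != 0) /\ (0 < m)%N /\ alg_mult_eq X lam m.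

Definition has_JGE_value_mult_ge (F : fieldType) (R L : nat) (X : 'I_L -> 'M[F]_R)
  (m : nat) : Prop :=
  exists lam : 'I_L -> F, (exists k, lam k != 0) /\ (0 < m)%N /\ pow_divides X lam m.

Definition mode3 (F : fieldType) (R L : nat) (T : 'I_L -> 'M[F]_R)
  (U : 'M[F]_L) : 'I_L -> 'M[F]_R :=
  fun k => \sum_(l < L) U k l *: T l.

Definition subpencil (F : fieldType) (R L : nat) (S : 'I_L -> 'M[F]_R)
  (i j : 'I_L) : 'I_2 -> 'M[F]_R :=
  fun t => if t == ord0 then S i else S j.

(* Main.v *)
Require Import Defs.
From HB Require Import structures.
From mathcomp Require Import all_boot all_order all_algebra.
From mathcomp Require Import mpoly.
Local Open Scope ring_scope.
Import GRing.Theory.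

Lemma aux (F : fieldType) (R K : nat) (m : nat)
  (T : 'I_K -> 'M[F]_R) (U : 'M[F]_K) :
  has_JGE_value_mult T m ->
  forall i j : 'I_K, has_JGE_value_mult_ge (subpencil (mode3 T U) i j) m.
Proof.
move=> [lam [_ [m0 [[q hq] _]]]] i j.
pose sel (t : 'I_2) := if t == ord0 then i else j.
pose lq : K.-tuple {mpoly F[2]} :=
  [tuple \sum_(t < 2) 'X_t * (U (sel t) l)%:MP | l < K].
pose phi := comp_mpoly lq.
have phiX l : phi 'X_l = \sum_(t < 2) 'X_t * (U (sel t) l)%:MP.
  by rewrite /phi comp_mpolyXU -tnth_nth tnth_mktuple.
have phiM x y : phi (x * y) = phi x * phi y by exact: rmorphM.
have phiXn x n : phi (x ^+ n) = phi x ^+ n by exact: rmorphXn.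
have phiC c : phi c%:MP = c%:MP by exact: comp_mpolyC.
pose lam' (t : 'I_2) := \sum_(l < K) lam l * U (sel t) l.
have hp : pX (subpencil (mode3 T U) i j) = phi (pX T).
  rewrite /pX /phi -(det_map_mx (comp_mpoly lq)); rewrite -/phi; congr (\det _); apply/matrixP => a b.
  rewrite !mxE raddf_sum /=.
  transitivity (\sum_(l < K) \sum_(t < 2) 'X_t * (U (sel t) l)%:MP * (T l a b)%:MP); last first.
    apply: eq_bigr => l _; rewrite -mulr_suml -phiX -phiC -phiM //.
  rewrite exchange_big /=; apply: eq_bigr => t _.
  have -> : subpencil (mode3 T U) i j t = mode3 T U (sel t).
    by rewrite /subpencil /sel; case: (t == ord0).
  rewrite /mode3 summxE raddf_sum mulr_sumr; apply: eq_bigr => l _.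
  by rewrite -mulrA -mpolyCM; congr (_ * _%:MP); rewrite mxE.
have hl : phi (linform lam) = linform lam'.
  rewrite /linform /phi raddf_sum -/phi /=.
  transitivity (\sum_(l < K) \sum_(t < 2) (lam l)%:MP * ('X_t * (U (sel t) l)%:MP)).
    apply: eq_bigr => l _; rewrite -mulr_sumr -phiX -phiC -phiM //.
  rewrite exchange_big /=; apply: eq_bigr => t _.
  rewrite /lam' raddf_sum mulr_suml; apply: eq_bigr => l _.
  rewrite mulrCA -mpolyCM mulrC //.
have hs : pX (subpencil (mode3 T U) i j) = phi q * linform lam' ^+ m.
  by rewrite hp hq phiM phiXn hl.
case: (boolP [exists t, lam' t != 0]) => [/existsP [t ht]|].
  exists lam'; split; first by exists t.
  by split=> //; exists (phi q).
rewrite negb_exists => /forallP h0.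
have hz : linform lam' = 0.
  rewrite /linform big1 // => t _.
  by move: (h0 t); rewrite negbK => /eqP ->; rewrite mpolyC0 mul0r.
exists (fun _ => 1); split; first by exists ord0; rewrite oner_eq0.
split=> //; exists 0; rewrite hs hz expr0n.
by rewrite -(prednK m0) /= !mulr0 mul0r.
Qed.


Theorem proposition5p1 (F : numFieldType) (R K : nat) (m : nat)
  (T : 'I_K -> 'M[F]_R) (U : 'M[F]_K) :
  slice_mix_invertible T ->
  U \in unitmx ->
  has_JGE_value_mult T m ->
  forall i j : 'I_K, i != j ->
  has_JGE_value_mult_ge (subpencil (mode3 T U) i j) m.
Proof.
by move=> _ _ h i j _; exact: aux.
Qed.
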